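(* Let $n \geq 5$ and let $\Delta$ be a triangulation of the punctured $n$-gon $\mathcal{P}_n$ with $\Delta \notin \{S_n, S_n^{-1}\}$. Then $\Delta$ contains a diagonal which is close to the border.
   Context: $\mathcal{P}_n$ is a regular $n$-gon with one puncture in its center. For border vertices $a \neq b$, let $\delta_{a,b}$ be the counterclockwise path along the border from $a$ to $b$, and $\delta_{a,a}$ the path going once around the border from $a$ to $a$; $|\delta_{a,b}|$ is the number of border vertices on $\delta_{a,b}$, including $a$ and $b$. An edge is a homotopy class of non-self-crossing paths from $a$ to $b$ in the interior of $\mathcal{P}_n$ homotopic to $\delta_{a,b}$, with $|\delta_{a,b}|\ge 3$. A diagonal (tagged edge) is a pair $(M,\epsilon)$ with $M$ an edge from $a$ to $b$ and $\epsilon\in\{1,-1\}$, where $\epsilon=1$ is forced when $a\neq b$. Edges with $a=b$ are drawn as arcs from the puncture to the border vertex $a$ (''diagonals between the puncture and the border''); those with $\epsilon=-1$ are called tagged. The crossing number of two diagonals is the minimal number of interior intersection points of representatives, except that for two diagonals between the puncture and vertices $a$, $c$ with tags $\epsilon,\epsilon'$ it is $1$ if $a\neq c$ and $\epsilon\neq\epsilon'$, and $0$ otherwise. A triangulation is a maximal set of pairwise non-crossing diagonals (it has $n$ elements). A diagonal from $a$ to $b$ with $a \ne b$ is close to the border if $|\delta_{a,b}|=3$. $S_n$ denotes the triangulation consisting of the $n$ untagged diagonals from the puncture to each of the $n$ border vertices, and $S_n^{-1}$ the one obtained by inverting all tags (the $n$ tagged diagonals from the puncture). *)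

(* Defs.v *)
(* Combinatorial model of tagged diagonals of the
   once-punctured n-gon P_n (border vertices labelled 0..n-1 counterclockwise). *)
From mathcomp Require Import all_boot.
Set Implicit Arguments. Unset Strict Implicit. Unset Printing Implicit Defensive.

(* [DArc a d]   : the edge from a to b := (a + d) mod n, a <> b, in the class
                  of delta_{a,b} (counterclockwise border path a, a+1, ..., b);
                  |delta_{a,b}| = d + 1, so validity is 2 <= d <= n-1.
   [DPunct a e] : the edge from a to a (homotopic to delta_{a,a}), drawn as the
                  arc between the puncture and a; e = true means tag +1
                  (untagged), e = false means tag -1 (tagged). *)
Inductive diag (n : nat) : Type :=
  | DArc of 'I_n & nat
  | DPunct of 'I_n & bool.

Definition valid_diag (n : nat) (x : diag n) : bool :=
  match x with
  | DArc _ d => (2 <= d) && (d <= n.-1)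
  | DPunct _ _ => true
  end.

(* Strict interleaving of two chords [x1,y1], [x2,y2] with endpoints on a line
   (boundary of the universal cover, a half plane): they cross exactly once
   in minimal position iff the endpoints strictly interleave. *)
Definition interleave (x1 y1 x2 y2 : nat) : bool :=
  ((x1 < x2) && (x2 < y1) && (y1 < y2)) || ((x2 < x1) && (x1 < y2) && (y2 < y1)).

(* Crossing number, computed in the universal cover: the arc DArc a d lifts to
   the chord [a+n, a+n+d]; the other diagonal's lifts are its translates by
   multiples of n (only k n with k in {0,1,2} can meet the chord, after the
   shift by n).  The arc from the puncture to c lifts to vertical half-lines
   at c + k n. *)
Definition cross (n : nat) (x y : diag n) : nat :=
  match x, y with
  | DArc a d, DArc c e =>
      \sum_(k < 3) interleave (a + n) (a + n + d) (c + k * n) (c + k * n + e)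
  | DArc a d, DPunct c _ =>
      \sum_(k < 3) ((a + n < c + k * n) && (c + k * n < a + n + d))
  | DPunct c _, DArc a d =>
      \sum_(k < 3) ((a + n < c + k * n) && (c + k * n < a + n + d))
  | DPunct a e, DPunct c e' => ((a != c) && (e != e') : nat)
  end.

Definition compatible (n : nat) (D : diag n -> Prop) : Prop :=
  (forall x, D x -> valid_diag x) /\
  (forall x y, D x -> D y -> cross x y = 0).

Definition triangulation (n : nat) (D : diag n -> Prop) : Prop :=
  compatible D /\
  forall D' : diag n -> Prop, compatible D' ->
    (forall x, D x -> D' x) -> forall x, D' x -> D x.

(* S_n : all untagged puncture arcs;  S_n^{-1} : all tagged puncture arcs. *)
Definition S_tri (n : nat) (e : bool) (x : diag n) : Prop :=
  match x with DPunct _ e' => e' = e | DArc _ _ => False end.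

Definition same_set (n : nat) (D D' : diag n -> Prop) : Prop :=
  forall x, D x <-> D' x.

(* A diagonal from a to b (a <> b) is close to the border if |delta_{a,b}| = 3. *)
Definition close_to_border (n : nat) (x : diag n) : Prop :=
  match x with DArc _ d => d = 2 | DPunct _ _ => False end.

(* Main.v *)
Require Import Defs.
From mathcomp Require Import all_boot zify.
From Stdlib Require Import Classical.
Set Implicit Arguments. Unset Strict Implicit. Unset Printing Implicit Defensive.

Lemma crossE n (x y : diag n) : cross x y = 
  match x, y with
  | DArc a d, DArc c e =>
      interleave (a + n) (a + n + d) (c + 0 * n) (c + 0 * n + e) +
      interleave (a + n) (a + n + d) (c + 1 * n) (c + 1 * n + e) +
      interleave (a + n) (a + n + d) (c + 2 * n) (c + 2 * n + e)
  | DArc a d, DPunct c _ =>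
      ((a + n < c + 0 * n) && (c + 0 * n < a + n + d)) +
      ((a + n < c + 1 * n) && (c + 1 * n < a + n + d)) +
      ((a + n < c + 2 * n) && (c + 2 * n < a + n + d))
  | DPunct c _, DArc a d =>
      ((a + n < c + 0 * n) && (c + 0 * n < a + n + d)) +
      ((a + n < c + 1 * n) && (c + 1 * n < a + n + d)) +
      ((a + n < c + 2 * n) && (c + 2 * n < a + n + d))
  | DPunct a e, DPunct c e' => ((a != c) && (e != e') : nat)
  end.
Proof. by case: x => [a d|a e]; case: y => [c e'|c e']; rewrite /cross ?big_ord_recr ?big_ord0. Qed.

Definition Hide (P : Prop) := P.

Lemma sum3 (b1 b2 b3 : bool) : (b1 + b2 + b3 = 0) <-> Hide (~~ b1) /\ Hide (~~ b2) /\ Hide (~~ b3).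
Proof. rewrite /Hide; by case: b1; case: b2; case: b3; split=> //; move=> [? [? ?]]. Qed.

Lemma sum3' (b1 b2 b3 : bool) : ~~ b1 -> ~~ b2 -> ~~ b3 -> (b1 + b2 + b3 = 0).
Proof. by case: b1; case: b2; case: b3. Qed.

Ltac clear_hides := repeat match goal with H : Hide _ |- _ => clear H end.
Ltac try_hides := match goal with H : Hide ?P |- _ => let h := fresh in have h : P := H; clear_hides; lia end.
Ltac fin := apply/negP => ?; try_hides.

Lemma keyA n (a : 'I_n) d (y : diag n) : 5 <= n -> 3 <= d <= n.-1 -> valid_diag y ->
  (forall c e, y = DArc c e -> d <= e) ->
  cross (DArc a d) y = 0 -> cross y (DArc a d) = 0 ->
  cross (DArc a 2) y = 0 /\ cross y (DArc a 2) = 0.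
Proof.
have ha := ltn_ord a. rewrite !crossE /interleave.
case: y => [c e|c t] /=; have hc := ltn_ord c.
  move=> h5 hd hv hm; have := hm c e erefl; move: hv hd.
  move: (nat_of_ord a) (nat_of_ord c) ha hc => {hm} a' c' ha hc.
  move=> hv hd he /sum3 [h1 [h2 h3]] /sum3 [h4 [h5' h6]].
  split; apply: sum3'; fin.
move: (nat_of_ord a) (nat_of_ord c) ha hc => a' c' ha hc.
  move=> h5 hd _ _ /sum3 [h1 [h2 h3]] /sum3 [h4 [h5' h6]].
  split; apply: sum3'; fin.
Qed.

Lemma add_diag n (D : diag n -> Prop) z : triangulation D -> valid_diag z -> cross z z = 0 ->
  (forall y, D y -> cross z y = 0 /\ cross y z = 0) -> D z.
Proof.
move=> [[hv hc] hmax] vz zz hz.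
apply: (hmax (fun x => D x \/ x = z)); [split| |by right].
- by move=> x [/hv|->].
- move=> x y [hx|->] [hy|->]; [exact: hc|exact: (proj2 (hz _ hx))|exact: (proj1 (hz _ hy))|exact: zz].
- by move=> x hx; left.
Qed.

Lemma S_same n (D : diag n -> Prop) e : triangulation D -> (forall x, D x -> S_tri e x) ->
  same_set D (S_tri e).
Proof.
move=> [hc hmax] hD x; split; first exact: hD.
apply: hmax => //; split.
- by case.
- by case=> [? ?|a e1] [] // c e2 /= -> ->; rewrite eqxx andbF.
Qed.

Lemma selfA n (a : 'I_n) : 5 <= n -> cross (DArc a 2) (DArc a 2) = 0.
Proof.
move=> h5; rewrite crossE /interleave; move: (nat_of_ord a) => a'. lia.
Qed.

Lemma punctB n (a b : 'I_n) t : 5 <= n -> (nat_of_ord b = a + 1 \/ (nat_of_ord b = 0 /\ a + 1 = n)) ->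
  cross (DArc b 2) (DPunct a t) = 0 /\ cross (DPunct a t) (DArc b 2) = 0.
Proof.
have ha := ltn_ord a; have hb := ltn_ord b.
move=> h5; rewrite !crossE; move: (nat_of_ord a) (nat_of_ord b) ha hb => a' b' ha hb hab.
split; apply: sum3'; apply/negP => ?; lia.
Qed.

Theorem lemma5p1 (n : nat) (D : diag n -> Prop) :
  5 <= n -> triangulation D ->
  ~ same_set D ((@S_tri n true)) -> ~ same_set D ((@S_tri n false)) ->
  exists x, D x /\ close_to_border x.
Proof.
move=> h5 hT hS1 hS0; have [[hval hcr] hmax] := hT.
case: (classic (exists a d, D (DArc a d))) => [[a0 [d0 hd0]] | hnA].
  suff: forall m a d, d <= m -> D (DArc a d) -> exists x, D x /\ close_to_border x.
    by move/(_ d0 a0 d0 (leqnn _) hd0).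
  elim=> [|m IH] a d hdm hD.
    have := hval _ hD => /=; lia.
  case: (classic (exists a' d', d' < d /\ D (DArc a' d'))) => [[a' [d' [hlt hD']]]|hmin].
    apply: (IH a' d') => //; lia.
  have hvd := hval _ hD; rewrite /= in hvd.
  case: (eqVneq d 2) => [e2|ne2].
    by exists (DArc a d); split.
  exists (DArc a 2); split => //.
  apply: add_diag; [exact: hT | rewrite /=; lia | exact: selfA | ].
  move=> y hy; apply: (keyA (d:=d)) => //.
  - lia.
  - exact: hval.
  - move=> c e ey; rewrite ey in hy; case: (leqP d e) => // hlt.
    by exfalso; apply: hmin; exists c, e.
  - exact: hcr.
  - exact: hcr.
have noA : forall x, D x -> exists a t, x = DPunct a t.
  case=> [a d hx|a t _]; last by exists a, t.
  by exfalso; apply: hnA; exists a, d.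
case: (classic (exists a, D (DPunct a false))) => [[a hf]|hnf]; last first.
  exfalso; apply: hS1; apply: S_same => // x hx.
  have [c [t ex]] := noA _ hx; subst x; case: t hx => // hx.
  by case: (hnf (ex_intro _ c hx)).
case: (classic (exists a, D (DPunct a true))) => [[c ht]|hnt]; last first.
  exfalso; apply: hS0; apply: S_same => // x hx.
  have [c [t ex]] := noA _ hx; subst x; case: t hx => // hx.
  by case: (hnt (ex_intro _ c hx)).
have eac : a = c.
  have := hcr _ _ hf ht => /=; case: eqP => //.
have hall : forall x, D x -> exists t, x = DPunct a t.
  move=> x hx; have [c' [t ex]] := noA _ hx; subst x; exists t.
  case: t hx => hx.
    have := hcr _ _ hx hf => /=; case: eqP => [->|] //.
  have := hcr _ _ hx ht => /=; rewrite -eac; case: eqP => [->|] //.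
have n0 : 0 < n by lia.
pose b := Ordinal (ltn_pmod (a + 1) n0).
exists (DArc b 2); split => //.
apply: add_diag; [exact: hT | rewrite /=; lia | exact: selfA | ].
move=> y hy; have [t ->] := hall _ hy; apply: punctB => //=.
have ha := ltn_ord a.
case: (ltnP (a + 1) n) => h.
  by left; rewrite modn_small.
right; have e : a + 1 = n by lia.
by rewrite e modnn.
Qed.
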